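(* If $\{Q^{a,n}\}_{(a,n)\in\mathcal I\times\mathbb Z}$ is a collection of polynomials in $\mathcal O$ with widening gap, then the sum $\sum_{(a,n)\in\mathcal I\times\mathbb Z}\frac{\partial Q^{a,n}}{\partial X^{a,n}}$ has only finitely many nonzero terms, and hence is a well-defined polynomial in $\mathcal O$.
   Context: $\mathcal I$ is a finite index set and $\mathcal O=\mathbb C[X^{a,n}]_{(a,n)\in\mathcal I\times\mathbb Z}$. A collection $\{P^{a,n}\}_{(a,n)\in\mathcal I\times\mathbb Z}$ of polynomials in $\mathcal O$ has widening gap if, for every $K\ge1$, $P^{a,n}\in\mathbb C[X^{b,m}:|m|<|n|-K,\ b\in\mathcal I]$ for all $a\in\mathcal I$, for all but finitely many $n\in\mathbb Z$. *)

(* Defs.v *)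
(* multinomials' monoid algebra {malg R[{cmonom K}]} is the
   polynomial ring over R in the variables indexed by the choiceType K. *)
From HB Require Import structures.
From mathcomp Require Import all_boot all_order all_algebra.
From mathcomp Require Import finmap.
From mathcomp Require Import monalg.
From mathcomp Require Import complex.
From mathcomp Require Import Rstruct.
From Stdlib Require Import Reals.

Set Implicit Arguments.
Unset Strict Implicit.
Unset Printing Implicit Defensive.

Import Order.TTheory GRing.Theory Num.Theory.
Local Open Scope ring_scope.

Definition CC : Type := complex.complex R.

Definition Var (I : finType) : choiceType := (I * int)%type.
Definition Opoly (I : finType) := {malg CC[{cmonom (Var I)}]}.

Definition pderiv (K : choiceType) (R : ringType) (v : K)
    (P : {malg R[{cmonom K}]}) : {malg R[{cmonom K}]} :=
  \sum_(m <- msupp P) << (P@_m *+ (m v)) *g (divcm m (ucm v)) >>.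

Definition in_subring (K : choiceType) (R : ringType) (S : K -> Prop)
    (P : {malg R[{cmonom K}]}) : Prop :=
  forall m, m \in msupp P -> forall v : K, (m v != 0)%N -> S v.

Definition widening_gap (I : finType) (P : I -> int -> Opoly I) : Prop :=
  forall K : int, 1 <= K ->
    exists s : seq int, forall n : int, n \notin s ->
      forall a : I,
        in_subring (fun v : Var I => `|v.2| < `|n| - K) (P a n).

(* Main.v *)
Require Import Defs.
From HB Require Import structures.
From mathcomp Require Import all_boot all_order all_algebra.
From mathcomp Require Import finmap monalg complex Rstruct.
From mathcomp Require Import zify.

Local Open Scope ring_scope.
Import GRing.Theory Num.Theory.

Theorem corollary3p4 (I : finType) (Q : I -> int -> Opoly I) :
  widening_gap Q ->
  exists s : seq (I * int), forall (a : I) (n : int),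
    pderiv ((a, n) : Var I) (Q a n) != 0 -> (a, n) \in s.
Proof.
move=> /(_ 1 (Order.POrderTheory.lexx _)) [s Hs].
exists [seq (a, n) | a <- enum I, n <- s] => a n.
case: (boolP (n \in s)) => ns.
  by move=> _; apply/allpairsP; exists (a, n); rewrite mem_enum.
move=> H; exfalso; move: H; apply/negP; rewrite negbK.
rewrite /pderiv big_seq big1 //= => m mP.
have -> : m (a, n) = 0%N.
  apply/eqP; apply: contraT => Hm.
  have := Hs n ns a m mP (a, n) Hm => /=.
  by rewrite Order.TotalTheory.ltNge lerBlDr lerDl ler01.
by rewrite mulr0n monalgU0.
Qed.
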